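(* Let $\{(F_j,d_j)\}_{j\ge 1}$ be a countable collection of metric spaces with labelled presentations $\mathcal F^j$ (with common alphabet $\{1,\dots,m\}$, $m\ge 2$) as described in the context. If $\mathcal F=\bigcup_{j\ge1}\mathcal F^j$ is a modular chaotic structure for $F=\bigcup_{j\ge1}F_j$, then the map $\varPhi$ is modular chaotic in the sense of Devaney, i.e. the modular similarity map $\varphi$ is modular-transitive, its modular-periodic points are modular-dense, and it is modular-sensitive.
   Context: Setting. Let $(F_j,d_j)$, $j=1,2,\ldots$, be metric spaces and $m\ge 2$ a natural number. For each $j$ there is a presentation $\mathcal F^j=\{\mathcal F^j_{i_1i_2\ldots i_n\ldots}: i_k\in\{1,\dots,m\},\ k=1,2,\ldots\}$: every infinite sequence $i_1i_2\ldots$ over $\{1,\dots,m\}$ labels an element of $F_j$, and every element of $F_j$ has at least one such label (labels need not be unique). Put $\delta_j(\mathcal F^j_{i_1i_2\ldots},\mathcal F^j_{j_1j_2\ldots})=d_j(f_1,f_2)$ when the two labels correspond to $f_1,f_2\in F_j$ (so different labels of the same point have $\delta_j=0$); write $\delta$ for $\delta_j$ on $\mathcal F^j$. For fixed $i_1,\dots,i_n$ let $\mathcal F^j_{i_1\ldots i_n}=\bigcup_{j_k\in\{1,\dots,m\}}\mathcal F^j_{i_1\ldots i_nj_1j_2\ldots}$. For $A,B\subseteq\mathcal F^j$: $\mathrm{diam}(A)=\sup\{\delta_j(x,y):x,y\in A\}$, $\delta_j(A,B)=\inf\{\delta_j(x,y):x\in A,y\in B\}$. Diameter condition for $j$: $\max_{i_1\ldots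 i_n}\mathrm{diam}(\mathcal F^j_{i_1\ldots i_n})\to0$ as $n\to\infty$. Separation condition for $j$: there exist $\varepsilon_0^j>0$ and a natural $n=n(j)$ such that for any indices $i_1\ldots i_n$ there exist indices $j_1\ldots j_n$ with $\delta_j(\mathcal F^j_{i_1\ldots i_n},\mathcal F^j_{j_1\ldots j_n})\ge\varepsilon_0^j$. $\mathcal F=\bigcup_j\mathcal F^j$ is a modular chaotic structure for $F=\bigcup_jF_j$ if the diameter condition holds for every $j$, the separation condition holds for every $j$, and $\varepsilon_0=\inf_j\varepsilon_0^j>0$. Maps. The modular similarity map $\varphi$ on $\mathcal F$ is given by $\varphi(\mathcal F^j_{i_1i_2i_3\ldots})=\mathcal F^{j+1}_{i_2i_3\ldots}$, $j\ge1$. The (multivalued) map $\varPhi:F\to F$ sends $f\in F_j$ to the set of all points of $F_{j+1}$ labelled by $\varphi(\mathcal F^j_{i_1i_2\ldots})$ where $i_1i_2\ldots$ ranges over all labels of $f$. $\varPhi$ is called modular chaotic in a given sense if $\varphi$ is. Neighborhoods. $\mathcal F^j_{i_1i_2\ldots}$ is in the $(k,l)$-neighborhood of $\mathcal F^p_{s_1s_2\ldots}$ ($j<p$) if $j+k=p$ and $i_{k+1}=s_1,\dots,i_{k+l}=s_l$. A point $\mathcal F^j_{i_1i_2\ldots}$ is periodic with period $p$ if its lower index is an endless repetition of a block of $p$ terms (modular-periodic). Modular-transitivity: there is a lower index $i_1i_2\ldots$ such that for any sequence $s_1s_2\ldots$ and naturals $j,l$ there exist positive integers $m'$ and $k>j$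 such that $\mathcal F^j_{i_1i_2\ldots}$ is in the $(m',l)$-neighborhood of $\mathcal F^k_{s_1s_2\ldots}$. Modular-density of periodic points: for any point $\mathcal F^k_{s_1s_2\ldots}$ and naturals $l$ and $m'\le k$ there is a periodic point $\mathcal F^{m'}_{i_1i_2\ldots}$ in the $(k-m',l)$-neighborhood of $\mathcal F^k_{s_1s_2\ldots}$. Modular-sensitivity: there is $\varepsilon_0>0$ such that for each $x=\mathcal F^j_{i_1i_2\ldots}$ and each $\kappa>0$ there exist $y=\mathcal F^j_{j_1j_2\ldots}$ and a natural $k$ with $\delta(x,y)<\kappa$ and $\delta(\varphi^k(x),\varphi^k(y))>\varepsilon_0$. Modular Devaney chaos: $\varphi$ is modular-transitive, modular-sensitive, and its modular-periodic points are modular-dense. *)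

(* Defs.v *)
From Stdlib Require Import Reals.
Open Scope R_scope.

(* The alphabet {1,...,m} is represented by {0,...,m-1}. *)
Definition digit (m : nat) := {k : nat | (k < m)%nat}.

(* An infinite lower index i_1 i_2 ... ; position t (0-based) holds i_{t+1}. *)
Definition lab_seq (m : nat) := nat -> digit m.

(* A point F^j_{i_1 i_2 ...} of the modular structure: (j, i). *)
Definition point (m : nat) := (nat * lab_seq m)%type.

Definition is_metric {X : Type} (d : X -> X -> R) : Prop :=
  (forall x y, 0 <= d x y) /\
  (forall x y, d x y = 0 <-> x = y) /\
  (forall x y, d x y = d y x) /\
  (forall x y z, d x z <= d x y + d y z).

Definition is_presentation {X : Type} {m : nat} (lab : lab_seq m -> X) : Prop :=
  forall x : X, exists s, lab s = x.

Definition delta {m : nat} (F : nat -> Type) (d : forall j, F j -> F j -> R)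
  (lab : forall j, lab_seq m -> F j) (j : nat) (a b : lab_seq m) : R :=
  d j (lab j a) (lab j b).

(* b lies in the cylinder F^j_{w_1...w_n}  iff  agree n w b *)
Definition agree {m : nat} (n : nat) (a b : lab_seq m) : Prop :=
  forall t, (t < n)%nat -> a t = b t.

Section Conds.
Context {m : nat} (dl : nat -> lab_seq m -> lab_seq m -> R).

Definition diameter_condition (j : nat) : Prop :=
  forall eps, 0 < eps -> exists N, forall n, (N <= n)%nat ->
    forall w a b : lab_seq m, agree n w a -> agree n w b -> dl j a b <= eps.

Definition separation_condition (j : nat) (eps0 : R) : Prop :=
  exists n : nat, forall w : lab_seq m, exists w' : lab_seq m,
    forall a b : lab_seq m, agree n w a -> agree n w' b -> eps0 <= dl j a b.

Definition modular_chaotic_structure : Prop :=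
  (forall j, (1 <= j)%nat -> diameter_condition j) /\
  exists eps0 : nat -> R,
    (forall j, (1 <= j)%nat -> 0 < eps0 j /\ separation_condition j (eps0 j)) /\
    exists c, 0 < c /\ forall j, (1 <= j)%nat -> c <= eps0 j.

Definition pdelta (x y : point m) : R := dl (fst x) (snd x) (snd y).

End Conds.

Definition phi {m : nat} (x : point m) : point m :=
  (S (fst x), fun n => snd x (S n)).

Definition in_nbhd {m : nat} (x y : point m) (k l : nat) : Prop :=
  (fst x + k)%nat = fst y /\
  forall t, (t < l)%nat -> snd x (k + t)%nat = snd y t.

Definition periodic_point {m : nat} (x : point m) : Prop :=
  exists p, (0 < p)%nat /\ forall n, snd x (n + p)%nat = snd x n.

Definition modular_transitive (m : nat) : Prop :=
  exists i : lab_seq m, forall (s : lab_seq m) (j l : nat), (1 <= j)%nat ->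
    exists m' k, (0 < m')%nat /\ (j < k)%nat /\ in_nbhd (j, i) (k, s) m' l.

Definition modular_dense_periodic (m : nat) : Prop :=
  forall (k : nat) (s : lab_seq m) (l m' : nat), (1 <= m')%nat -> (m' <= k)%nat ->
    exists i : lab_seq m, periodic_point (m', i) /\ in_nbhd (m', i) (k, s) (k - m') l.

Definition modular_sensitive {m : nat} (dl : nat -> lab_seq m -> lab_seq m -> R) : Prop :=
  exists eps0, 0 < eps0 /\
    forall (j : nat) (i : lab_seq m) (kappa : R), (1 <= j)%nat -> 0 < kappa ->
      exists (i' : lab_seq m) (k : nat), (1 <= k)%nat /\
        pdelta dl (j, i) (j, i') < kappa /\
        pdelta dl (Nat.iter k phi (j, i)) (Nat.iter k phi (j, i')) > eps0.

Definition modular_Devaney_chaotic (m : nat) (dl : nat -> lab_seq m -> lab_seq m -> R) : Prop :=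
  modular_transitive m /\ modular_dense_periodic m /\ modular_sensitive dl.

(* Main.v *)
Require Import Defs.
From Stdlib Require Import Reals.
From Stdlib Require Import Arith Lia Lra List ProofIrrelevance FunctionalExtensionality.
Open Scope R_scope.

Section Aux.
Variable m : nat.
Hypothesis Hm0 : m <> 0%nat.

Fixpoint code (w : nat -> nat) (l : nat) : nat :=
  match l with
  | O => O
  | S l' => (w O + m * code (fun n => w (S n)) l')%nat
  end.

Definition dig (c t : nat) : nat := ((c / m ^ t) mod m)%nat.

Lemma dig_code : forall l w q t, (forall u, w u < m)%nat -> (t < l)%nat ->
  dig (code w l + m ^ l * q) t = w t.
Proof.
  induction l as [|l IH]; intros w q t Hw Ht; [lia|].
  unfold dig in *. simpl code.
  replace (w O + m * code (fun n => w (S n)) l + m ^ S l * q)%nat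
    with (w O + (code (fun n => w (S n)) l + m ^ l * q) * m)%nat
    by (simpl; ring).
  destruct t as [|t].
  - rewrite Nat.pow_0_r, Nat.div_1_r, Nat.Div0.mod_add.
    apply Nat.mod_small, Hw.
  - rewrite Nat.pow_succ_r', <- Nat.Div0.div_div, Nat.div_add by exact Hm0.
    rewrite (Nat.div_small (w O) m) by apply Hw. simpl.
    apply (IH (fun n => w (S n)) q t); [intro; apply Hw | lia].
Qed.

Definition block (b : nat) : list nat := map (fun t => dig b t) (seq 0 (S b)).

Fixpoint flat (k : nat) : list nat :=
  match k with O => nil | S k' => flat k' ++ block k' end.

Lemma flat_len : forall k, (k <= length (flat k))%nat.
Proof.
  induction k; simpl; [lia|]. rewrite length_app. unfold block.
  rewrite length_map, length_seq. lia.
Qed.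

Lemma flat_prefix : forall k1 k2, (k1 <= k2)%nat -> exists r, flat k2 = flat k1 ++ r.
Proof.
  intros k1 k2 H. induction H.
  - exists nil. now rewrite app_nil_r.
  - destruct IHle as [r Hr]. exists (r ++ block m0). simpl. rewrite Hr, app_assoc. auto.
Qed.

Lemma flat_nth : forall k1 k2 n, (n < length (flat k1))%nat -> (n < length (flat k2))%nat ->
  nth n (flat k1) 0%nat = nth n (flat k2) 0%nat.
Proof.
  intros k1 k2 n H1 H2. destruct (Nat.le_ge_cases k1 k2) as [H|H].
  - destruct (flat_prefix _ _ H) as [r Hr]. rewrite Hr, app_nth1; auto.
  - destruct (flat_prefix _ _ H) as [r Hr]. rewrite Hr, app_nth1; auto.
Qed.

Definition ival (n : nat) : nat := nth n (flat (S n)) 0%nat.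

Lemma ival_block : forall b t, (t <= b)%nat ->
  ival (length (flat b) + t) = dig b t.
Proof.
  intros b t Ht. unfold ival.
  rewrite (flat_nth _ (S b)).
  - simpl. rewrite app_nth2 by lia.
    replace (length (flat b) + t - length (flat b))%nat with t by lia.
    unfold block. rewrite nth_indep with (d' := dig b 0) by (rewrite length_map, length_seq; lia).
    rewrite map_nth, seq_nth by lia. reflexivity.
  - pose proof (flat_len (S (length (flat b) + t))). lia.
  - simpl. rewrite length_app. unfold block. rewrite length_map, length_seq. lia.
Qed.

End Aux.

Lemma digit_eq (m : nat) (a b : digit m) : proj1_sig a = proj1_sig b -> a = b.
Proof.
  destruct a as [a Ha], b as [b Hb]; simpl; intro E; subst. f_equal. apply proof_irrelevance.
Qed.

Lemma iter_phi (m : nat) k (x : point m) :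
  Nat.iter k phi x = ((fst x + k)%nat, fun n => snd x (k + n)%nat).
Proof.
  induction k.
  - destruct x as [j i]. simpl. rewrite Nat.add_0_r. reflexivity.
  - simpl Nat.iter. rewrite IHk. unfold phi. simpl. f_equal; [lia|].
    apply functional_extensionality. intro n. f_equal. lia.
Qed.

Theorem theorem1 (m : nat) (Hm : (2 <= m)%nat)
  (F : nat -> Type) (d : forall j, F j -> F j -> R)
  (lab : forall j, lab_seq m -> F j)
  (Hmet : forall j, (1 <= j)%nat -> is_metric (d j))
  (Hpres : forall j, (1 <= j)%nat -> is_presentation (lab j))
  (Hstruct : modular_chaotic_structure (delta F d lab)) :
  modular_Devaney_chaotic m (delta F d lab).
Proof.
  assert (Hm0 : m <> 0%nat) by lia.
  split; [|split].
  -
    set (mk := fun x : nat => exist (fun k => (k < m)%nat) (x mod m) (Nat.mod_upper_bound x m Hm0)).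
    exists (fun n => mk (ival m n)).
    intros s j l Hj.
    set (w := fun t => proj1_sig (s t)).
    set (b := (code m w l + m ^ l * (l + 1))%nat).
    assert (Hb : (l + 1 <= b)%nat).
    { unfold b. assert (1 <= m ^ l)%nat by (apply Nat.neq_0_lt_0, Nat.pow_nonzero; lia). nia. }
    exists (length (flat m b)), (j + length (flat m b))%nat.
    pose proof (flat_len m Hm0 b).
    split; [lia|]. split; [lia|]. split; [reflexivity|].
    intros t Ht. simpl. apply digit_eq. simpl.
    rewrite ival_block by (auto; lia). unfold b. rewrite dig_code by (auto; try lia; intro u; unfold w; apply (proj2_sig (s u))).
    apply Nat.mod_small. apply (proj2_sig (s t)).
  -
    intros k s l m' H1 H2.
    set (a := (k - m')%nat). set (P := (a + l + 1)%nat).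
    exists (fun n => s ((n mod P) - a)%nat).
    split.
    + exists P. split; [lia|]. intro n. simpl.
      replace (n + P)%nat with (n + 1 * P)%nat by lia. rewrite Nat.Div0.mod_add. reflexivity.
    + split; [simpl; lia|]. intros t Ht. simpl. f_equal.
      rewrite Nat.mod_small by lia. lia.
  -
    destruct Hstruct as [Hdiam [eps0 [Hsep [c [Hc Hce]]]]].
    exists (c / 2). split; [lra|].
    intros j i kappa Hj Hk.
    destruct (Hdiam j Hj (kappa / 2) ltac:(lra)) as [N HN].
    set (k := (N + 1)%nat).
    destruct (Hsep (j + k)%nat ltac:(lia)) as [_ [n' Hn']].
    destruct (Hn' (fun n => i (k + n)%nat)) as [w' Hw'].
    exists (fun t => if Nat.ltb t k then i t else w' (t - k)%nat), k.
    split; [lia|]. split.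
    + unfold pdelta; simpl.
      assert (delta F d lab j i (fun t => if Nat.ltb t k then i t else w' (t - k)%nat) <= kappa / 2).
      { apply (HN k ltac:(lia) i); intros t Ht; auto.
        destruct (Nat.ltb_spec t k); [auto|lia]. }
      lra.
    + rewrite !iter_phi. unfold pdelta. simpl.
      assert (Hge : eps0 (j + k)%nat <= delta F d lab (j + k)%nat (fun n => i (k + n)%nat)
        (fun n => if Nat.ltb (k + n) k then i (k + n)%nat else w' (k + n - k)%nat)).
      { apply Hw'; intros t Ht; auto.
        destruct (Nat.ltb_spec (k + t) k); [lia|]. f_equal. lia. }
      pose proof (Hce (j + k)%nat ltac:(lia)). lra.
Qed.
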